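(* For every $n\ge -1$, the join product $\ast\colon \mathrm{N}(\triangle_+^n)^{\otimes 2}\to\mathrm{N}(\triangle_+^n)$ is a chain map, natural in $[n]$, and it makes $\mathrm{N}(\triangle_+^n)$ a Poincaré duality algebra of formal dimension $n+1$ whose unit is the empty simplex $[-1]\to[n]$.
   Context: Coefficients are in $\mathbb{Z}$. $\mathrm{N}(\triangle_+^n)$ is the right suspension of the normalized chain complex of the standard augmented $n$-simplex: it is the free abelian group with basis the subsets $\{v_0<\dots<v_{k-1}\}\subseteq\{0,\dots,n\}$, $0\le k\le n+1$, written $[v_0,\dots,v_{k-1}]$ and placed in degree $k$ (the empty simplex $\emptyset$ in degree $0$), with the convention $[v_{\pi(0)},\dots,v_{\pi(k-1)}]=(-1)^{\mathrm{sgn}\,\pi}[v_0,\dots,v_{k-1}]$, and differential $\partial[v_0,\dots,v_{k-1}]=\sum_i(-1)^i[v_0,\dots,\widehat{v_i},\dots,v_{k-1}]$ (so $\partial[v]=\emptyset$). The join product sends $[v_0,\dots,v_{p-1}]\otimes[v_p,\dots,v_{m-1}]$ to $[v_0,\dots,v_{m-1}]$ (i.e. $(-1)^{\mathrm{sgn}\,\pi}$ times the ordered generator, $\pi$ the ordering permutation) if all $v_i$ are distinct, and to $0$ otherwise. A Poincaré duality algebra of formal dimension $d$ is a connected graded-commutative algebra $A$, finitely generated in each degree, such that $A_i=0$ for $i>d$, $A_d$ has rank $1$, and the multiplication pairing $A_i\otimes A_{d-i}\to A_d$ is non-degenerate for all $i$. *)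

(* Defs.v *)
From mathcomp Require Import all_boot all_order all_algebra.
Set Implicit Arguments. Unset Strict Implicit. Unset Printing Implicit Defensive.
Import Order.TTheory GRing.Theory Num.Theory.
Local Open Scope ring_scope.

(* Vertex set [n] = {0,...,n} is modelled as 'I_m with m = n+1 (so n >= -1
   corresponds to m : nat).  A basis simplex [v_0,...,v_{k-1}] (v_i increasing)
   is a subset S : {set 'I_m}, of degree #|S|.  The empty set is the empty
   simplex, in degree 0. *)

Notation free I := {ffun I -> int}.

Definition basis (I : finType) (i : I) : free I := [ffun j => ((j == i) : nat)%:R].

Definition ext (I J : finType) (f : I -> free J) (x : free I) : free J :=
  \sum_(i : I) f i *~ x i.

Notation Nsimp m := {ffun {set 'I_m} -> int}.

(* Tensor square N (x) N, free on pairs of basis simplices; x (x) y. *)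
Notation Nsimp2 m := {ffun ({set 'I_m} * {set 'I_m}) -> int}.
Definition tens (m : nat) (x y : Nsimp m) : Nsimp2 m := [ffun p => x p.1 * y p.2].

Definition Nhom (m k : nat) (x : Nsimp m) : Prop :=
  forall S : {set 'I_m}, x S != 0 -> #|S| = k.

(* Differential: d[v_0..v_{k-1}] = sum_i (-1)^i [.. ^v_i ..], where i is the
   position of v in the increasing enumeration of S, i.e. #{u in S | u < v}. *)
Definition bnd_basis (m : nat) (S : {set 'I_m}) : Nsimp m :=
  \sum_(v in S) basis (S :\ v) *~ (-1) ^+ #|[set u in S | (u < v)%N]|.
Definition bnd (m : nat) : Nsimp m -> Nsimp m := ext (@bnd_basis m).

Definition bnd2 (m : nat) : Nsimp2 m -> Nsimp2 m :=
  ext (fun p : {set 'I_m} * {set 'I_m} =>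
         tens (bnd (basis p.1)) (basis p.2)
         + tens (basis p.1) (bnd (basis p.2)) *~ (-1) ^+ #|p.1|).

(* Sign of the permutation ordering the concatenation of the increasing lists
   S and T (S, T disjoint): (-1)^(number of inversions) where the inversions
   are the pairs (s,t) in S x T with s > t. *)
Definition join_sign (m : nat) (S T : {set 'I_m}) : int :=
  (-1) ^+ #|[set p in setX S T | (p.2 < p.1)%N]|.

Definition join_basis (m : nat) (S T : {set 'I_m}) : Nsimp m :=
  if [disjoint S & T] then basis (S :|: T) *~ join_sign S T else 0.

Definition join (m : nat) : Nsimp2 m -> Nsimp m :=
  ext (fun p : {set 'I_m} * {set 'I_m} => join_basis p.1 p.2).
Definition jmul (m : nat) (x y : Nsimp m) : Nsimp m := join (tens x y).

Definition junit (m : nat) : Nsimp m := basis (set0 : {set 'I_m}).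

(* Functoriality: an order-preserving map f : [m-1] -> [k-1] sends a simplex
   S to f(S) if f is injective on S (then f preserves the vertex order, so no
   sign) and to 0 (degenerate simplex, normalized chains) otherwise. *)
Definition Nmap (m k : nat) (f : 'I_m -> 'I_k) : Nsimp m -> Nsimp k :=
  ext (fun S : {set 'I_m} =>
         if #|f @: S| == #|S| then basis (f @: S) else 0).
Definition Nmap2 (m k : nat) (f : 'I_m -> 'I_k) : Nsimp2 m -> Nsimp2 k :=
  ext (fun p : {set 'I_m} * {set 'I_m} =>
         tens (Nmap f (basis p.1)) (Nmap f (basis p.2))).

Definition is_PD_algebra (A : zmodType) (homA : nat -> A -> Prop)
    (mul : A -> A -> A) (one : A) (d : nat) : Prop :=
    (* graded abelian group: A = direct sum of the subgroups A_k *)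
      ((forall k, homA k 0 /\ forall a x y, homA k x -> homA k y -> homA k (x *~ a + y))
       /\ (forall x, exists (N : nat) (c : nat -> A),
              (forall k, homA k (c k)) /\ x = \sum_(k < N) c k)
       /\ (forall (N : nat) (c : nat -> A), (forall k, homA k (c k)) ->
              \sum_(k < N) c k = 0 -> forall k, (k < N)%N -> c k = 0)) /\
      (forall x y z, mul (mul x y) z = mul x (mul y z)) /\
      (forall x, mul one x = x /\ mul x one = x) /\
      (forall a x y z, mul (x *~ a + y) z = mul x z *~ a + mul y z
                    /\ mul z (x *~ a + y) = mul z x *~ a + mul z y) /\
      (forall p q x y, homA p x -> homA q y -> homA (p + q)%N (mul x y)) /\
      (forall p q x y, homA p x -> homA q y ->
          mul x y = mul y x *~ (-1) ^+ (p * q)) /\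
      (homA 0%N one /\ (forall x, homA 0%N x -> exists c : int, x = one *~ c)
       /\ (forall c : int, one *~ c = 0 -> c = 0)) /\
      (forall k, exists s : seq A, (forall i : 'I_(size s), homA k s`_i) /\
          forall x, homA k x -> exists c : 'I_(size s) -> int,
             x = \sum_(i < size s) s`_i *~ c i) /\
      (forall i x, (d < i)%N -> homA i x -> x = 0) /\
      (* A_d has rank 1 (here: free of rank one), and the pairing is
         non-degenerate *)
      ((exists g, homA d g /\ forall x, homA d x -> exists! c : int, x = g *~ c)
       /\ forall i, (i <= d)%N ->
          (forall x, homA i x -> x != 0 ->
              exists y, homA (d - i)%N y /\ mul x y != 0)
       /\ (forall y, homA (d - i)%N y -> y != 0 ->
              exists x, homA i x /\ mul x y != 0)).

(* Main.v *)
Require Import Defs.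
From mathcomp Require Import all_boot all_order all_algebra.
Import GRing.Theory.
Local Open Scope ring_scope.
Set Implicit Arguments. Unset Strict Implicit.

Lemma zmulE (c d : int) : c *~ d = c * d.
Proof. exact: mulrzz. Qed.

Section Lin.
Variables I J K : finType.

Definition lin (F : {ffun I -> int} -> {ffun J -> int}) :=
  F 0 = 0 /\ forall (a : int) x y, F (x *~ a + y) = F x *~ a + F y.

Lemma basisE (i j : I) : basis i j = ((j == i) : nat)%:R.
Proof. by rewrite /basis ffunE. Qed.

Lemma decomp (x : {ffun I -> int}) : x = \sum_i basis i *~ x i.
Proof.
apply/ffunP => j; rewrite sum_ffunE (bigD1 j) //= big1 ?addr0.
  by rewrite ffunMzE basisE eqxx zmulE mul1r.
by move=> i /negbTE ij; rewrite ffunMzE basisE eq_sym ij mul0rz.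
Qed.

Lemma lin_sum (F : {ffun I -> int} -> {ffun J -> int}) (Fl : lin F) (T : finType) (P : pred T)
   (G : T -> {ffun I -> int}) (c : T -> int) :
  F (\sum_(t | P t) G t *~ c t) = \sum_(t | P t) F (G t) *~ c t.
Proof.
case: Fl => F0 FD.
elim/big_rec2: _ => // t y1 y2 _ <-.
by rewrite FD.
Qed.

Lemma lin_eq (F G : {ffun I -> int} -> {ffun J -> int}) : lin F -> lin G ->
  (forall i, F (basis i) = G (basis i)) -> forall x, F x = G x.
Proof.
move=> Fl Gl E x; rewrite (decomp x) (lin_sum Fl) (lin_sum Gl).
by apply: eq_bigr => i _; rewrite E.
Qed.

Lemma linZ (F : {ffun I -> int} -> {ffun J -> int}) (Fl : lin F) a x : F (x *~ a) = F x *~ a.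
Proof. by case: Fl => F0 FD; have := FD a x 0; rewrite !addr0 F0 addr0. Qed.

Lemma ext_lin (f : I -> {ffun J -> int}) : lin (ext f).
Proof.
split.
  by rewrite /ext big1 // => i _; rewrite ffunE mulr0z.
move=> a x y; rewrite /ext mulrz_suml -big_split /=; apply: eq_bigr => i _.
by rewrite ffunE ffunMzE mulrzDr zmulE mulrzA.
Qed.

Lemma ext_basis (f : I -> {ffun J -> int}) i : ext f (basis i) = f i.
Proof.
rewrite /ext (bigD1 i) //= big1 ?addr0.
  by rewrite basisE eqxx.
by move=> j /negbTE ij; rewrite basisE ij mulr0z.
Qed.

End Lin.

Lemma lin_id (I : finType) : lin (fun x : {ffun I -> int} => x).
Proof. by []. Qed.


Lemma lin_comp (I J K : finType) (F : {ffun J -> int} -> {ffun K -> int}) (G : {ffun I -> int} -> {ffun J -> int}) :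
  lin F -> lin G -> lin (fun x => F (G x)).
Proof.
move=> [F0 FD] [G0 GD]; split; first by rewrite G0 F0.
by move=> a x y; rewrite GD FD.
Qed.


Lemma tens_linl m (y : Nsimp m) : lin (fun x => tens x y).
Proof.
split; first by apply/ffunP => p; rewrite !ffunE mul0r.
by move=> a x x'; apply/ffunP => p; rewrite !(ffunE, ffunMzE) mulrDl mulrzAl.
Qed.

Lemma tens_linr m (x : Nsimp m) : lin (fun y => tens x y).
Proof.
split; first by apply/ffunP => p; rewrite !ffunE mulr0.
by move=> a y y'; apply/ffunP => p; rewrite !(ffunE, ffunMzE) mulrDr mulrzAr.
Qed.

Lemma tens_basis m (S T : {set 'I_m}) : tens (basis S) (basis T) = basis (S, T).
Proof.
apply/ffunP => [[A B]]; rewrite !ffunE /= xpair_eqE.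
by case: (A == S); case: (B == T); rewrite ?mulr1 ?mulr0.
Qed.

From mathcomp Require Import ring.

Section Big.
Variables (R : Type) (idx : R) (op : Monoid.com_law idx).
Variable (m : nat).

Lemma bigsetU (S T : {set 'I_m}) (F : 'I_m -> R) : [disjoint S & T] ->
  \big[op/idx]_(v in S :|: T) F v =
  op (\big[op/idx]_(v in S) F v) (\big[op/idx]_(v in T) F v).
Proof.
move=> d; rewrite -bigU //; apply: eq_bigl => v; by rewrite in_setU.
Qed.

Lemma bigsetD1 (S : {set 'I_m}) v (F : 'I_m -> R) : v \in S ->
  \big[op/idx]_(u in S) F u = op (F v) (\big[op/idx]_(u in S :\ v) F u).
Proof.
move=> vS; rewrite (bigD1 v) //=; congr (op _ _); apply: eq_bigl => u.
by rewrite !inE andbC.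
Qed.
End Big.

Lemma prodD1 m (S : {set 'I_m}) v (F : 'I_m -> int) : v \in S ->
  \prod_(u in S) F u = F v * \prod_(u in S :\ v) F u.
Proof. exact: bigsetD1. Qed.

Lemma prodU m (S T : {set 'I_m}) (F : 'I_m -> int) : [disjoint S & T] ->
  \prod_(u in S :|: T) F u = (\prod_(u in S) F u) * \prod_(u in T) F u.
Proof. exact: bigsetU. Qed.

Lemma sumU m (S T : {set 'I_m}) (F : 'I_m -> Nsimp m) : [disjoint S & T] ->
  \sum_(u in S :|: T) F u = (\sum_(u in S) F u) + \sum_(u in T) F u.
Proof. exact: bigsetU. Qed.

Lemma sumD1 m (S : {set 'I_m}) v (F : 'I_m -> Nsimp m) : v \in S ->
  \sum_(u in S) F u = F v + \sum_(u in S :\ v) F u.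
Proof. exact: bigsetD1. Qed.


Section Signs.
Variable m : nat.
Implicit Types S T U : {set 'I_m}.

Definition e (s t : 'I_m) : int := if (t < s)%N then -1 else 1.
Definition pos S (v : 'I_m) : int := \prod_(u in S) e v u.
Definition J S T : int := \prod_(s in S) \prod_(t in T) e s t.

Lemma e_sq s t : e s t * e s t = 1.
Proof. by rewrite /e; case: ifP; rewrite ?mulr1 ?mulrNN ?mulr1. Qed.

Lemma e_refl s : e s s = 1.
Proof. by rewrite /e ltnn. Qed.

Lemma e_anti s t : s != t -> e s t * e t s = -1.
Proof.
rewrite /e => st; case: (ltngtP t s) => h.
- by rewrite mulr1.
- by rewrite mul1r.
- by move: st; rewrite (ord_inj h) eqxx.
Qed.

Lemma prod_sq (A : {set 'I_m}) (F : 'I_m -> int) :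
  (forall i, F i * F i = 1) -> (\prod_(i in A) F i) * (\prod_(i in A) F i) = 1.
Proof. by move=> h; rewrite -big_split /= big1. Qed.

Lemma pos_sq S v : pos S v * pos S v = 1.
Proof. exact: prod_sq (fun u => e_sq v u). Qed.

Lemma sign_count (T0 : finType) (A : {set T0}) (P : pred T0) :
  (-1) ^+ #|[set x in A | P x]| = \prod_(x in A) (if P x then -1 else 1) :> int.
Proof.
rewrite -big_mkcondr /= -prodr_const; apply: eq_bigl => x; by rewrite inE.
Qed.

Lemma join_signE S T : join_sign S T = J S T.
Proof.
rewrite /join_sign sign_count /J pair_big /=.
by apply: eq_bigl => -[a b]; rewrite in_setX.
Qed.

Lemma posE S (v : 'I_m) : (-1) ^+ #|[set u in S | (u < v)%N]| = pos S v.
Proof. by rewrite sign_count. Qed.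

Lemma prod_anti S v : v \notin S -> \prod_(s in S) (e v s * e s v) = (-1) ^+ #|S|.
Proof.
move=> vS; rewrite -prodr_const; apply: eq_bigr => s sS; apply: e_anti.
by apply/eqP => h; move: vS; rewrite h sS.
Qed.

End Signs.

Section JoinBasics.
Variable m : nat.
Implicit Types S T U : {set 'I_m}.

Lemma join_lin : lin (@join m).
Proof. exact: ext_lin. Qed.

Lemma bnd_lin : lin (@bnd m).
Proof. exact: ext_lin. Qed.

Lemma jbE S T : join_basis S T =
  if [disjoint S & T] then basis (S :|: T) *~ J S T else 0.
Proof. by rewrite /join_basis join_signE. Qed.

Lemma jb_nd S T w : w \in S -> w \in T -> join_basis S T = 0.
Proof.
move=> wS wT; rewrite /join_basis -setI_eq0.
have : w \in S :&: T by rewrite inE wS.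
by case: eqP => // ->; rewrite inE.
Qed.

Lemma join_basis2 S T : join (basis (S, T)) = join_basis S T.
Proof. by rewrite /join ext_basis. Qed.

Lemma bnd_basisE S : bnd (basis S) =
  \sum_(v in S) basis (S :\ v) *~ pos S v.
Proof.
rewrite /bnd ext_basis /bnd_basis; apply: eq_bigr => v _; by rewrite posE.
Qed.

Lemma jmulE (x y : Nsimp m) :
  jmul x y = \sum_S \sum_T join_basis S T *~ (x S * y T).
Proof.
rewrite /jmul /join /ext (pair_bigA _ (fun S T => join_basis S T *~ (x S * y T))).
by apply: eq_bigr => p _; rewrite ffunE.
Qed.

Lemma jmul_linl (y : Nsimp m) : lin (fun x => jmul x y).
Proof. exact: (lin_comp join_lin (tens_linl y)). Qed.

Lemma jmul_linr (x : Nsimp m) : lin (fun y => jmul x y).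
Proof. exact: (lin_comp join_lin (tens_linr x)). Qed.

Lemma jmul_basis S T : jmul (basis S) (basis T) = join_basis S T.
Proof. by rewrite /jmul tens_basis join_basis2. Qed.

End JoinBasics.

Section Chain.
Variable m : nat.
Implicit Types S T U : {set 'I_m}.

Lemma jt_l S T : join (tens (bnd (basis S)) (basis T)) =
  \sum_(v in S) join_basis (S :\ v) T *~ pos S v.
Proof.
rewrite bnd_basisE.
have := lin_sum (lin_comp (@join_lin m) (tens_linl (basis T)))
  (fun v => v \in S) (fun v => basis (S :\ v)) (pos S).
move=> /= ->; apply: eq_bigr => v _; by rewrite tens_basis join_basis2.
Qed.

Lemma jt_r S T : join (tens (basis S) (bnd (basis T))) =
  \sum_(v in T) join_basis S (T :\ v) *~ pos T v.
Proof.
rewrite bnd_basisE.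
have := lin_sum (lin_comp (@join_lin m) (tens_linr (basis S)))
  (fun v => v \in T) (fun v => basis (T :\ v)) (pos T).
move=> /= ->; apply: eq_bigr => v _; by rewrite tens_basis join_basis2.
Qed.

Lemma J_D1l S T v : v \in S -> J S T = (\prod_(t in T) e v t) * J (S :\ v) T.
Proof. by move=> vS; rewrite /J (prodD1 _ vS). Qed.

Lemma J_D1r S T v : v \in T -> J S T = (\prod_(s in S) e s v) * J S (T :\ v).
Proof.
move=> vT; rewrite /J -big_split /=; apply: eq_bigr => s _.
by rewrite (prodD1 _ vT).
Qed.

Lemma chain_basis S T :
  bnd (join_basis S T) =
  join (tens (bnd (basis S)) (basis T)) +
  join (tens (basis S) (bnd (basis T))) *~ (-1) ^+ #|S|.
Proof.
rewrite jt_l jt_r mulrz_suml.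
case dST: [disjoint S & T].
- rewrite jbE dST (linZ (@bnd_lin m)) bnd_basisE mulrz_suml sumU //.
  congr (_ + _); apply: eq_bigr => v vS.
  + have vT : v \notin T by rewrite (disjointFr dST vS).
    have d' : [disjoint S :\ v & T].
      by apply: disjointWl dST; apply: subD1set.
    rewrite jbE d' -!mulrzA.
    have -> : (S :|: T) :\ v = (S :\ v) :|: T.
      by apply/setP => x; rewrite !inE; case: (eqVneq x v) => [->|]; rewrite /= ?(negbTE vT).
    congr (_ *~ _).
    rewrite /pos prodU // -/(pos S v) -/(pos T v) (J_D1l T vS) -/(pos T v).
    have -> : pos S v * pos T v * (pos T v * J (S :\ v) T)
      = (pos T v * pos T v) * (J (S :\ v) T * pos S v) by ring.
    by rewrite pos_sq mul1r.
  + have vS' : v \notin S by rewrite (disjointFl dST vS).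
    have d' : [disjoint S & T :\ v].
      by apply: disjointWr dST; apply: subD1set.
    rewrite jbE d' -!mulrzA.
    have -> : (S :|: T) :\ v = S :|: (T :\ v).
      by apply/setP => x; rewrite !inE; case: (eqVneq x v) => [->|]; rewrite /= ?(negbTE vS').
    congr (_ *~ _).
    rewrite /pos prodU // -/(pos S v) -/(pos T v) (J_D1r S vS).
    rewrite -(prod_anti vS') /pos big_split /=.
    set a := \prod_(u in S) e v u; set b := \prod_(u in T) e v u.
    set c := \prod_(s in S) e s v; set j := J _ _.
    ring.
- rewrite jbE dST (proj1 (@bnd_lin m)).
  have [w] : exists w, w \in S :&: T.
    by apply/set0Pn; rewrite setI_eq0 dST.
  rewrite inE => /andP [wS wT].
  rewrite (sumD1 _ wS) (sumD1 _ wT).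
  rewrite big1; last first.
    by move=> v; rewrite !inE => /andP [vw vS]; rewrite (@jb_nd _ _ _ w) ?mul0rz // !inE wS andbT eq_sym vw.
  rewrite big1; last first.
    by move=> v; rewrite !inE => /andP [vw vT]; rewrite (@jb_nd _ _ _ w) ?mul0rz // !inE wT andbT eq_sym vw.
  rewrite !addr0 /join_basis.
  have E1 : (S :\ w) :&: T = S :&: (T :\ w).
    by apply/setP => x; rewrite !inE; case: (x == w); rewrite /= ?andbF.
  rewrite -!setI_eq0 E1; case: ifP => [d|]; last by rewrite !mul0rz addr0.
  have -> : (S :\ w) :|: T = S :|: (T :\ w).
    apply/setP => x; rewrite !inE; case: (eqVneq x w) => [->|] //=.
    by rewrite wS wT.
  rewrite !join_signE -!mulrzA -mulrzDr.
  suff -> : J (S :\ w) T * pos S w + J S (T :\ w) * (pos T w * (-1) ^+ #|S|) = 0.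
    by rewrite mulr0z.
  have -> : (-1) ^+ #|S| = - (-1) ^+ #|S :\ w| :> int.
    by rewrite (cardsD1 w S) wS exprS mulN1r.
  rewrite (J_D1r (S :\ w) wT) (J_D1l (T :\ w) wS) /pos (prodD1 _ wS)
    (prodD1 _ wT) e_refl !mul1r.
  have AB : (\prod_(s in S :\ w) e s w) * (\prod_(s in S :\ w) e w s)
     = (-1) ^+ #|S :\ w|.
    by rewrite -(prod_anti (v:=w)) ?setD11 // -big_split /=; apply: eq_bigr => s _; rewrite mulrC.
  have CC := prod_sq (T :\ w) (fun t => e_sq w t).
  rewrite -AB.
  move: CC; set A := \prod_(s in S :\ w) e s w; set B := \prod_(s in S :\ w) e w s.
  set C := \prod_(t in T :\ w) e w t; set X := J _ _ => CC.
  have -> : forall A B C X : int, A * X * B + C * X * (C * - (A * B)) = (A * X * B) * (1 - C * C) by move=> *; ring.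
  by rewrite CC subrr mulr0.
Qed.

End Chain.
From mathcomp Require Import zify.

Section Algebra.
Variable m : nat.
Implicit Types S T U : {set 'I_m}.

Lemma jmulZl (x y : Nsimp m) a : jmul (x *~ a) y = jmul x y *~ a.
Proof. exact: (linZ (jmul_linl y)). Qed.
Lemma jmulZr (x y : Nsimp m) a : jmul x (y *~ a) = jmul x y *~ a.
Proof. exact: (linZ (jmul_linr x)). Qed.
Lemma jmul0l (y : Nsimp m) : jmul 0 y = 0.
Proof. exact: (proj1 (jmul_linl y)). Qed.
Lemma jmul0r (x : Nsimp m) : jmul x 0 = 0.
Proof. exact: (proj1 (jmul_linr x)). Qed.

Lemma disjU_l S T U : [disjoint S :|: T & U] = [disjoint S & U] && [disjoint T & U].
Proof. by rewrite -!setI_eq0 setIUl setU_eq0. Qed.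
Lemma disjU_r S T U : [disjoint S & T :|: U] = [disjoint S & T] && [disjoint S & U].
Proof. by rewrite -!setI_eq0 setIUr setU_eq0. Qed.

Lemma J_Ul S T U : [disjoint S & T] -> J (S :|: T) U = J S U * J T U.
Proof. by move=> d; rewrite /J prodU. Qed.
Lemma J_Ur S T U : [disjoint T & U] -> J S (T :|: U) = J S T * J S U.
Proof.
by move=> d; rewrite /J -big_split /=; apply: eq_bigr => s _; rewrite prodU.
Qed.

Lemma assoc_basis S T U :
  jmul (join_basis S T) (basis U) = jmul (basis S) (join_basis T U).
Proof.
rewrite !jbE.
case dST: [disjoint S & T]; case dTU: [disjoint T & U];
  rewrite ?jmul0l ?jmul0r ?jmulZl ?jmulZr ?jmul_basis ?jbE ?disjU_l ?disjU_r ?dST ?dTU //=.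
- case dSU: [disjoint S & U]; last by rewrite !mul0rz.
  rewrite setUA -!mulrzA J_Ul // J_Ur //; congr (_ *~ _); ring.
- by case: [disjoint S & U]; rewrite ?mul0rz.
- by case: [disjoint S & U]; rewrite ?mul0rz.
Qed.

Lemma J_sq S T : J S T * J S T = 1.
Proof. by apply: prod_sq => s; apply: prod_sq => t; apply: e_sq. Qed.

Lemma comm_basis S T :
  join_basis S T = join_basis T S *~ (-1) ^+ (#|S| * #|T|).
Proof.
rewrite !jbE disjoint_sym; case: ifP => d; last by rewrite mul0rz.
rewrite setUC -mulrzA; congr (_ *~ _).
have E : J S T * J T S = (-1) ^+ (#|S| * #|T|).
  rewrite /J [X in _ * X]exchange_big -big_split /=.
  rewrite mulnC exprM -prodr_const; apply: eq_bigr => s sS.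
  rewrite -big_split -prodr_const /=; apply: eq_bigr => t tT; apply: e_anti.
  by apply/eqP => st; move: (disjointFl d sS); rewrite st tT.
rewrite -E.
have := J_sq T S; move: (J S T) (J T S) => a b h.
by rewrite mulrCA h mulr1.
Qed.

Lemma unit_l S : join_basis set0 S = basis S.
Proof.
rewrite jbE -setI_eq0 set0I eqxx set0U /J big_set0.
by rewrite -[RHS]mulr1z.
Qed.

Lemma unit_r S : join_basis S set0 = basis S.
Proof.
rewrite jbE -setI_eq0 setI0 eqxx setU0 /J big1 ?mulr1z // => s _.
by rewrite big_set0.
Qed.

End Algebra.

Section Natural.
Variables m k : nat.
Variable f : 'I_m -> 'I_k.
Hypothesis mono : {homo f : i j / (i <= j)%N}.
Implicit Types S T U : {set 'I_m}.

Lemma Nmap_lin : lin (Nmap f).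
Proof. exact: ext_lin. Qed.

Lemma Nmap_basis S :
  Nmap f (basis S) = if #|f @: S| == #|S| then basis (f @: S) else 0.
Proof. by rewrite /Nmap ext_basis. Qed.

Lemma J_imset S T : {in S :|: T &, injective f} -> [disjoint S & T] ->
  J (f @: S) (f @: T) = J S T.
Proof.
move=> inj d.
have injS : {in S &, injective f}.
  by move=> x y xS yS; apply: inj; rewrite inE ?xS ?yS.
have injT : {in T &, injective f}.
  by move=> x y xS yS; apply: inj; rewrite inE ?xS ?yS ?orbT.
rewrite /J (big_imset _ injS) /=; apply: eq_bigr => s sS.
rewrite (big_imset _ injT) /=; apply: eq_bigr => t tT.
rewrite /e; congr (if _ then _ else _).
have st : s != t by apply/eqP => st; move: (disjointFr d sS); rewrite st tT.
case: (ltnP t s) => h.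
- rewrite ltn_neqAle mono ?(ltnW h) // andbT.
  apply/negP => /eqP/val_inj ft; move: st; rewrite (inj _ _ _ _ ft) ?eqxx //.
  + by rewrite inE tT orbT.
  + by rewrite inE sS.
- by rewrite ltnNge mono.
Qed.

Lemma nat_basis S T :
  Nmap f (join_basis S T) = join (tens (Nmap f (basis S)) (Nmap f (basis T))).
Proof.
have tens0l (y : Nsimp k) : tens 0 y = 0 := proj1 (tens_linl y).
have tens0r (y : Nsimp k) : tens y 0 = 0 := proj1 (tens_linr y).
have join0 : join (0 : Nsimp2 k) = 0 := proj1 (@join_lin k).
rewrite !Nmap_basis jbE.
have cS := leq_imset_card f S; have cT := leq_imset_card f T.
case dST: [disjoint S & T]; last first.
  rewrite (proj1 Nmap_lin).
  case: eqP => IS; last by rewrite tens0l join0.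
  case: eqP => IT; last by rewrite tens0r join0.
  rewrite tens_basis join_basis2.
  have [w] : exists w, w \in S :&: T.
    by apply/set0Pn; rewrite setI_eq0 dST.
  rewrite inE => /andP [wS wT].
  by rewrite (@jb_nd _ _ _ (f w)) // imset_f.
rewrite (linZ Nmap_lin) Nmap_basis imsetU.
have cU := cardsUI S T; have cfU := cardsUI (f @: S) (f @: T).
move: (dST); rewrite -setI_eq0 -cards_eq0 => /eqP cST.
case: eqP => IU.
- move: cS cT cU cfU cST IU.
  set a := #|f @: S|; set b := #|f @: T|; set c := #|_ :&: _|.
  set d := #|_ :&: _|; set u := #|_ :|: _|; set u' := #|_ :|: _|.
  set sS := #|S|; set sT := #|T|.
  move=> cS cT cU cfU cST IU.
  have IS : a = sS by clear -cS cT cU cfU cST IU; clearbody a b c d u u' sS sT; lia.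
  have IT : b = sT by clear -cS cT cU cfU cST IU; clearbody a b c d u u' sS sT; lia.
  have d0 : d = 0%N by clear -cS cT cU cfU cST IU; clearbody a b c d u u' sS sT; lia.
  have dfST : [disjoint f @: S & f @: T].
    by rewrite -setI_eq0 -cards_eq0; apply/eqP; rewrite -/d.
  rewrite IS IT !eqxx tens_basis join_basis2 jbE dfST J_imset //.
  by apply/imset_injP; rewrite imsetU; apply/eqP; exact: IU.
- case: eqP => IS; last by rewrite mul0rz tens0l join0.
  case: eqP => IT; last by rewrite mul0rz tens0r join0.
  rewrite mul0rz tens_basis join_basis2 jbE.
  case: ifP => // dfST; exfalso; apply: IU.
  move: dfST; rewrite -setI_eq0 -cards_eq0 => /eqP c0.
  move: cS cT cU cfU cST IS IT c0.
  set a := #|f @: S|; set b := #|f @: T|; set c := #|_ :&: _|.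
  set d := #|_ :&: _|; set u := #|_ :|: _|; set u' := #|_ :|: _|.
  set sS := #|S|; set sT := #|T|.
  clearbody a b c d u u' sS sT; lia.
Qed.

End Natural.

Section Hom.
Variable m : nat.
Implicit Types S T U : {set 'I_m}.

Lemma Nhom0 k : Nhom k (0 : Nsimp m).
Proof. by move=> S; rewrite ffunE eqxx. Qed.

Lemma NhomD k a (x y : Nsimp m) : Nhom k x -> Nhom k y -> Nhom k (x *~ a + y).
Proof.
move=> hx hy S; rewrite ffunE ffunMzE.
case: (eqVneq (x S) 0) => [->|]; first by rewrite mul0rz add0r; apply: hy.
by move=> /hx.
Qed.

Lemma Nhom_sum k (I : finType) (P : pred I) (F : I -> Nsimp m) :
  (forall i, P i -> Nhom k (F i)) -> Nhom k (\sum_(i | P i) F i).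
Proof.
move=> h; apply: (big_ind (Nhom k)); first exact: Nhom0.
  by move=> x y hx hy; have := NhomD (a:=1) hx hy; rewrite mulr1z.
exact: h.
Qed.

Lemma Nhom_basis k S c : #|S| = k -> Nhom k (basis S *~ c).
Proof.
move=> h U; rewrite ffunMzE basisE; case: (eqVneq U S) => [->|] //=.
by rewrite mul0rz eqxx.
Qed.

Lemma Nhom_basis1 k S : #|S| = k -> Nhom k (basis S).
Proof. by move=> h; rewrite -[basis S]mulr1z; apply: Nhom_basis. Qed.

Lemma Nhom_jb S T c : Nhom (#|S| + #|T|) (join_basis S T *~ c).
Proof.
rewrite jbE; case: ifP => d; last by rewrite mul0rz; apply: Nhom0.
rewrite -mulrzA; apply: Nhom_basis.
have := cardsUI S T; move: d; rewrite -setI_eq0 => /eqP ->; rewrite cards0 addn0.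
by [].
Qed.

Lemma card_le (S : {set 'I_m}) : (#|S| <= m)%N.
Proof. by have := max_card (mem S); rewrite card_ord. Qed.

Lemma card_top (S : {set 'I_m}) : #|S| = m -> S = setT.
Proof.
by move=> h; apply/eqP; rewrite eqEcard subsetT cardsT card_ord h leqnn.
Qed.

Lemma nz_coef (x : Nsimp m) : x != 0 -> exists S, x S != 0.
Proof.
case: (pickP (fun S => x S != 0)) => [S h | h]; first by exists S.
move=> /eqP []; apply/ffunP => S; rewrite ffunE.
by move: (h S) => /negbFE/eqP.
Qed.

Lemma compl_uniq (A B : {set 'I_m}) :
  [disjoint A & B] -> A :|: B = setT -> B = ~: A.
Proof.
move=> d u; apply/setP => x; rewrite inE.
case xA: (x \in A) => /=; first by rewrite (disjointFr d xA).
by move/setP: u => /(_ x); rewrite !inE xA.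
Qed.

Lemma jmul_basis_r (x : Nsimp m) C :
  jmul x (basis C) = \sum_S join_basis S C *~ x S.
Proof.
rewrite {1}(decomp x).
have := lin_sum (jmul_linl (basis C)) xpredT (@basis _) x.
move=> /= ->; apply: eq_bigr => S _; by rewrite jmul_basis.
Qed.

Lemma jmul_basis_l (y : Nsimp m) C :
  jmul (basis C) y = \sum_S join_basis C S *~ y S.
Proof.
rewrite {1}(decomp y).
have := lin_sum (jmul_linr (basis C)) xpredT (@basis _) y.
move=> /= ->; apply: eq_bigr => S _; by rewrite jmul_basis.
Qed.

Lemma J_neq0 S T : J S T != 0.
Proof. by apply/eqP => h; have := J_sq S T; rewrite h mul0r. Qed.

Lemma pair_r (x : Nsimp m) S :
  (jmul x (basis (~: S))) setT = x S * J S (~: S).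
Proof.
rewrite jmul_basis_r sum_ffunE (bigD1 S) //= big1 ?addr0.
  rewrite ffunMzE jbE -setI_eq0 setICr eqxx setUCr ffunMzE basisE eqxx.
  by rewrite !zmulE mul1r mulrC.
move=> S' nS; rewrite ffunMzE jbE; case: ifP => d; last by rewrite ffunE mul0rz.
rewrite ffunMzE basisE; case: eqP => [u|]; last by rewrite !mul0rz.
have := compl_uniq d (esym u) => /setC_inj E.
by move: nS; rewrite E eqxx.
Qed.

Lemma pair_l (y : Nsimp m) T :
  (jmul (basis (~: T)) y) setT = y T * J (~: T) T.
Proof.
rewrite jmul_basis_l sum_ffunE (bigD1 T) //= big1 ?addr0.
  rewrite ffunMzE jbE -setI_eq0 setIC setICr eqxx setUC setUCr ffunMzE basisE eqxx.
  by rewrite !zmulE mul1r mulrC.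
move=> T' nT; rewrite ffunMzE jbE; case: ifP => d; last by rewrite ffunE mul0rz.
rewrite ffunMzE basisE; case: eqP => [u|]; last by rewrite !mul0rz.
have := compl_uniq d (esym u); rewrite setCK => E.
by move: nT; rewrite E eqxx.
Qed.

End Hom.

Unset Implicit Arguments.
Set Strict Implicit.

Theorem theorem4p4 (m : nat) :
  (* the join product N (x) N -> N is a chain map (of degree 0) *)
  ((forall S T : {set 'I_m}, Nhom (#|S| + #|T|)%N (join (basis (S, T))))
   /\ (forall z : Nsimp2 m, bnd (join z) = join (bnd2 z)))
  (* natural in [n]: for every order-preserving f : [n] -> [n'] *)
  /\ (forall (k : nat) (f : 'I_m -> 'I_k),
        {homo f : i j / (i <= j)%N} ->
        forall z : Nsimp2 m, Nmap f (join z) = join (Nmap2 f z))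
  (* Poincare duality algebra of formal dimension n+1 = m, unit = empty simplex *)
  /\ is_PD_algebra (@Nhom m) (@jmul m) (junit m) m.
Proof.
split; [split|split].
- move=> S T; rewrite join_basis2 -[join_basis S T]mulr1z; exact: Nhom_jb.
- move=> z.
  have Fl := lin_comp (@bnd_lin m) (@join_lin m).
  have Gl := lin_comp (@join_lin m) (ext_lin (fun p : {set 'I_m} * {set 'I_m} =>
         tens (bnd (basis p.1)) (basis p.2)
         + tens (basis p.1) (bnd (basis p.2)) *~ (-1) ^+ #|p.1|)).
  apply: (lin_eq Fl Gl) => -[S T] /=.
  rewrite join_basis2 /bnd2 ext_basis /= chain_basis [in RHS]addrC.
  by rewrite (proj2 (@join_lin m)) addrC.
- move=> k f mono z.
  have Fl := lin_comp (Nmap_lin f) (@join_lin m).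
  have Gl := lin_comp (@join_lin k) (ext_lin (fun p : {set 'I_m} * {set 'I_m} =>
         tens (Nmap f (basis p.1)) (Nmap f (basis p.2)))).
  apply: (lin_eq Fl Gl) => -[S T] /=.
  by rewrite join_basis2 /Nmap2 ext_basis /= nat_basis.
split.
  split; [move=> k; split; [exact: Nhom0 | move=> a x y; exact: NhomD] | split].
  - move=> x; exists m.+1, (fun k : nat => [ffun S : {set 'I_m} => if #|S| == k then x S else 0] : Nsimp m).
    split.
      move=> k S /=; rewrite ffunE; case: (#|S| =P k) => [-> | _] //; by rewrite eqxx.
    apply/ffunP => S; rewrite sum_ffunE.
    under eq_bigr do rewrite ffunE.
    rewrite -big_mkcond /= (eq_bigl (fun i : 'I_m.+1 => i == #|S| :> nat)); last first.
      by move=> i; rewrite eq_sym.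
    by rewrite (big_ord1_eq _ (fun _ => x S)) ltnS card_le.
  - move=> N c hc s0 k kN; apply/ffunP => S; rewrite ffunE.
    case: (eqVneq (c k S) 0) => // ck; exfalso.
    have hk := hc k S ck.
    move/ffunP: s0 => /(_ S); rewrite sum_ffunE ffunE (bigD1 (Ordinal kN)) //= big1 ?addr0.
      by move=> /eqP; rewrite (negbTE ck).
    move=> i ni; apply/eqP; apply: contraR ni => ci.
    have := hc i S ci; rewrite hk => ik.
    by apply/eqP; apply: val_inj.
split.
  move=> x y z.
  have F1 := lin_comp (jmul_linl z) (jmul_linl y).
  apply: (lin_eq F1 (jmul_linl (jmul y z))) => S /=.
  have F2 := lin_comp (jmul_linl z) (jmul_linr (basis S)).
  have G2 := lin_comp (jmul_linr (basis S)) (jmul_linl z).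
  apply: (lin_eq F2 G2) => T /=.
  have G3 := lin_comp (jmul_linr (basis S)) (jmul_linr (basis T)).
  apply: (lin_eq (jmul_linr _) G3) => U /=.
  by rewrite !jmul_basis assoc_basis.
split.
  move=> x; split.
    apply: (lin_eq (jmul_linr _) (lin_id _)) => S /=.
    by rewrite /junit jmul_basis unit_l.
  apply: (lin_eq (jmul_linl _) (lin_id _)) => S /=.
  by rewrite /junit jmul_basis unit_r.
split.
  move=> a x y z; split; [exact: (proj2 (jmul_linl z)) | exact: (proj2 (jmul_linr z))].
split.
  move=> p q x y hx hy; rewrite jmulE.
  apply: Nhom_sum => S _ /=; apply: Nhom_sum => T _ /=.

  case: (eqVneq (x S) 0) => [->|xS]; first by rewrite mul0r mulr0z; apply: Nhom0.
  case: (eqVneq (y T) 0) => [->|yT]; first by rewrite mulr0 mulr0z; apply: Nhom0.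
  by rewrite -(hx S xS) -(hy T yT); apply: Nhom_jb.
split.
  move=> p q x y hx hy; rewrite !jmulE mulrz_suml exchange_big /=.
  apply: eq_bigr => T _; rewrite mulrz_suml; apply: eq_bigr => S _.
  case: (eqVneq (x S) 0) => [->|xS]; first by rewrite mul0r mulr0 !mulr0z mul0rz.
  case: (eqVneq (y T) 0) => [->|yT]; first by rewrite mul0r mulr0 !mulr0z mul0rz.
  by rewrite comm_basis (hx S xS) (hy T yT) mulrzAC [x S * _]mulrC.
split.
  split; first by apply: Nhom_basis1; rewrite cards0.
  split.
    move=> x hx; exists (x set0); apply/ffunP => S.
    rewrite ffunMzE basisE; case: (eqVneq S set0) => [->|nS] /=.
      by rewrite zmulE mul1r.
    rewrite mul0rz; apply/eqP; apply: contraR nS => xS.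
    by apply/eqP; apply: cards0_eq; apply: hx.
  move=> c /ffunP /(_ set0); rewrite ffunMzE basisE eqxx ffunE zmulE mul1r.
  by [].
split.
  move=> k.
  set r := enum [pred X : {set 'I_m} | #|X| == k].
  exists (map (@basis _) r); split.
    move=> i; have ir : (i < size r)%N by move: (ltn_ord i) (size_map (@basis _) r) => + <-.
    rewrite (nth_map set0) //; apply: Nhom_basis1.
    by have := mem_nth set0 ir; rewrite mem_enum inE => /eqP.
  move=> x hx; exists (fun i => x (nth set0 r i)).
  rewrite -(big_mkord xpredT (fun i => (map (@basis _) r)`_i *~ x (nth set0 r i))).
  rewrite size_map.
  rewrite (eq_big_nat _ _ (F2 := fun i => basis (nth set0 r i) *~ x (nth set0 r i))); last first.
    by move=> i /andP [_ ir]; rewrite (nth_map set0).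
  have E : \sum_(0 <= i < size r) basis (nth set0 r i) *~ x (nth set0 r i)
     = \sum_(S <- r) basis S *~ x S by rewrite (big_nth set0).
  rewrite E big_enum /=.
  rewrite {1}(decomp x) (bigID (fun S : {set 'I_m} => #|S| == k)) /=.
  rewrite [X in _ + X]big1 ?addr0.
    by apply: eq_bigl => S; rewrite inE.
  move=> S nS; case: (eqVneq (x S) 0) => [->|xS]; first by rewrite mulr0z.
  by move: nS; rewrite (hx S xS) eqxx.
split.
  move=> i x im hx; apply/ffunP => S; rewrite ffunE.
  case: (eqVneq (x S) 0) => // xS; exfalso.
  by have := card_le S; rewrite (hx S xS) leqNgt im.
split.
  exists (basis setT); split.
    by apply: Nhom_basis1; rewrite cardsT card_ord.
  move=> x hx; exists (x setT); split.
    apply/ffunP => S; rewrite ffunMzE basisE; case: (eqVneq S setT) => [->|nS] /=.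
      by rewrite zmulE mul1r.
    rewrite mul0rz; apply/eqP; apply: contraR nS => xS.
    by apply/eqP; apply: card_top; apply: hx.
  move=> c' ->; rewrite ffunMzE basisE eqxx.
  by rewrite zmulE mul1r.
move=> i im; split.
- move=> x hx /nz_coef [S xS]; exists (basis (~: S)); split.
    apply: Nhom_basis1; move: (cardsC S) (card_ord m) (hx S xS).
    set a := #|~: S|; set b := #|S|; set c := #|'I_m|.
    clearbody a b c; lia.
  apply/eqP => h; have := pair_r x S; rewrite h ffunE => /esym /eqP.
  by rewrite mulf_eq0 (negbTE xS) (negbTE (J_neq0 _ _)).
- move=> y hy /nz_coef [T yT]; exists (basis (~: T)); split.
    apply: Nhom_basis1; move: (cardsC T) (card_ord m) (hy T yT).
    set a := #|~: T|; set b := #|T|; set c := #|'I_m|.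
    clearbody a b c; lia.
  apply/eqP => h; have := pair_l y T; rewrite h ffunE => /esym /eqP.
  by rewrite mulf_eq0 (negbTE yT) (negbTE (J_neq0 _ _)).
Qed.
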